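(* Let $(X,\le)$ be a poset, $E$ an equivalence relation on $X$ with ${\le}\subseteq E$, and $\alpha:X\to X$ an order automorphism of $(X,\le)$ with $\alpha\subseteq E$. (i) If $0=\alpha\circ({\le}^c)^\smile=({\le}^c)^\smile\circ\alpha$, then $\langle\mathsf{Up}(\mathbf E),\cap,\cup,\circ,\le,0,{\sim},-\rangle$ is a distributive InFL-algebra. (ii) For a positive integer $n$, the algebra in (i) is $n$-periodic if and only if $|\alpha|=n$.
   Context: For binary relations: converse $R^\smile=\{(x,y)\mid(y,x)\in R\}$; composition $R\circ S=\{(x,y)\mid\exists z\,((x,z)\in R,(z,y)\in S)\}$. A function $\alpha$ is identified with its graph; $\alpha^0=\mathrm{id}_X$, $\alpha^{k+1}=\alpha^k\circ\alpha$, and the order $|\alpha|$ is the smallest positive integer $k$ with $\alpha^k=\mathrm{id}_X$. For a poset $(X,\le)$ and an equivalence relation $E\supseteq{\le}$, $E$ is partially ordered by $(u,v)\preceq(x,y)$ iff $x\le u$ and $v\le y$; $\mathbf E=(E,\preceq)$ and $\mathsf{Up}(\mathbf E)$ is its set of up-sets (a distributive lattice under $\cap,\cup$; it is closed under $\circ$ with identity $\le$). For $R\subseteq E$, $R^c=E\setminus R$. Residuals: $R\backslash S=(R^\smile\circ S^c)^c$, $R/S=(R^c\circ S^\smile)^c$; ${\sim}R=R\backslash 0$, $-R=0/R$. An FL-algebra is a residuated lattice with an extra constant $0$; it is InFL if ${\sim}{-}a={-}{\sim}a=a$ for all $a$; it is $n$-periodic if $n$ is the smallest positive integer with ${\sim}^na=-^na$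 for all $a$. An order automorphism is a bijection $\alpha$ with $x\le y\iff\alpha(x)\le\alpha(y)$. *)

(* Defs.v *)
From Stdlib Require Import Arith.

Set Implicit Arguments.

Definition relation (X : Type) := X -> X -> Prop.

Section Rel.
Variable X : Type.

Definition conv (R : relation X) : relation X := fun x y => R y x.
Definition comp (R S : relation X) : relation X :=
  fun x y => exists z, R x z /\ S z y.
Definition graph (f : X -> X) : relation X := fun x y => f x = y.
Definition complE (E R : relation X) : relation X := fun x y => E x y /\ ~ R x y.
Definition capR (R S : relation X) : relation X := fun x y => R x y /\ S x y.
Definition cupR (R S : relation X) : relation X := fun x y => R x y \/ S x y.
Definition ldivR (E R S : relation X) : relation X :=
  complE E (comp (conv R) (complE E S)).
Definition rdivR (E R S : relation X) : relation X :=
  complE E (comp (complE E R) (conv S)).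

Definition is_poset (le : relation X) : Prop :=
  (forall x, le x x) /\ (forall x y, le x y -> le y x -> x = y) /\
  (forall x y z, le x y -> le y z -> le x z).
Definition is_equivalence (E : relation X) : Prop :=
  (forall x, E x x) /\ (forall x y, E x y -> E y x) /\
  (forall x y z, E x y -> E y z -> E x z).
Definition order_automorphism (le : relation X) (a : X -> X) : Prop :=
  (forall x y, a x = a y -> x = y) /\ (forall y, exists x, a x = y) /\
  (forall x y, le x y <-> le (a x) (a y)).

(* R in Up(E): R is a subset of E and an up-set w.r.t.
   (u,v) <= (x,y) iff x <= u and v <= y *)
Definition UpE (le E : relation X) (R : relation X) : Prop :=
  (forall x y, R x y -> E x y) /\
  (forall u v x y, R u v -> le x u -> le v y -> R x y).

Definition fun_order (a : X -> X) (n : nat) : Prop :=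
  0 < n /\ (forall x, Nat.iter n a x = x) /\
  (forall k, 0 < k < n -> ~ (forall x, Nat.iter k a x = x)).
End Rel.

Section Alg.
Variables (A : Type) (U : A -> Prop)
  (meet join mul : A -> A -> A) (one zero : A) (ldiv rdiv : A -> A -> A).

Definition lat_le (x y : A) : Prop := meet x y = x.

Definition FL_algebra : Prop :=
  U one /\ U zero /\
  (forall x y, U x -> U y ->
     U (meet x y) /\ U (join x y) /\ U (mul x y) /\ U (ldiv x y) /\ U (rdiv x y)) /\
  (forall x y, U x -> U y -> meet x y = meet y x /\ join x y = join y x) /\
  (forall x y z, U x -> U y -> U z ->
     meet x (meet y z) = meet (meet x y) z /\ join x (join y z) = join (join x y) z) /\
  (forall x y, U x -> U y -> meet x (join x y) = x /\ join x (meet x y) = x) /\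
  (forall x y z, U x -> U y -> U z -> mul x (mul y z) = mul (mul x y) z) /\
  (forall x, U x -> mul one x = x /\ mul x one = x) /\
  (forall x y z, U x -> U y -> U z ->
     (lat_le (mul x y) z <-> lat_le y (ldiv x z)) /\
     (lat_le (mul x y) z <-> lat_le x (rdiv z y))).

Definition lneg (x : A) : A := ldiv x zero.
Definition rneg (x : A) : A := rdiv zero x.

Definition distributive_InFL_algebra : Prop :=
  FL_algebra /\
  (forall x y z, U x -> U y -> U z -> meet x (join y z) = join (meet x y) (meet x z)) /\
  (forall x, U x -> lneg (rneg x) = x /\ rneg (lneg x) = x).

Definition periodic_at (k : nat) : Prop :=
  forall x, U x -> Nat.iter k lneg x = Nat.iter k rneg x.
Definition n_periodic (n : nat) : Prop :=
  0 < n /\ periodic_at n /\ (forall k, 0 < k < n -> ~ periodic_at k).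
End Alg.

(* Main.v *)
Require Import Defs.
From Stdlib Require Import Arith Lia Classical FunctionalExtensionality PropExtensionality.

Lemma rel_ext {X : Type} (R S : relation X) :
  (forall x y, R x y <-> S x y) -> R = S.
Proof.
  intro H. apply functional_extensionality; intro x.
  apply functional_extensionality; intro y.
  apply propositional_extensionality; apply H.
Qed.

Lemma lat_le_iff {X : Type} (R S : relation X) :
  lat_le (@capR X) R S <-> (forall x y, R x y -> S x y).
Proof.
  unfold lat_le; split.
  - intros H x y r. assert (c : capR R S x y) by (rewrite H; exact r).
    destruct c; auto.
  - intro H; apply rel_ext; intros x y; unfold capR; firstorder.
Qed.

Section S.
Variables (X : Type) (le E : relation X) (alpha : X -> X).
Hypotheses (Hle : is_poset le) (HE : is_equivalence E)
  (HleE : forall x y, le x y -> E x y)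
  (Halpha : order_automorphism le alpha)
  (HalphaE : forall x, E x (alpha x)).

Local Notation Z := (comp (graph alpha) (conv (complE E le))).
Local Notation U := (UpE le E).
Local Notation g := (fun R => rdivR E Z R).
Local Notation h := (fun R => ldivR E R Z).

Lemma le_refl x : le x x. Proof. destruct Hle as [? [? ?]]; eauto. Qed.
Lemma le_trans x y z : le x y -> le y z -> le x z. Proof. destruct Hle as [? [? ?]]; eauto. Qed.
Lemma le_anti x y : le x y -> le y x -> x = y. Proof. destruct Hle as [? [? ?]]; eauto. Qed.
Lemma E_refl x : E x x. Proof. destruct HE as [? [? ?]]; eauto. Qed.
Lemma E_sym x y : E x y -> E y x. Proof. destruct HE as [? [? ?]]; eauto. Qed.
Lemma E_trans x y z : E x y -> E y z -> E x z. Proof. destruct HE as [? [? ?]]; eauto. Qed.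
Lemma a_surj y : exists x, alpha x = y. Proof. destruct Halpha as [? [? ?]]; eauto. Qed.
Lemma a_mono x y : le x y <-> le (alpha x) (alpha y). Proof. destruct Halpha as [? [? ?]]; eauto. Qed.

Lemma UE R x y : U R -> R x y -> E x y. Proof. intros [H _]; apply H. Qed.
Lemma Uup R u v x y : U R -> R u v -> le x u -> le v y -> R x y.
Proof. intros [_ H]; apply H. Qed.

Lemma Z_iff x y : Z x y <-> E y (alpha x) /\ ~ le y (alpha x).
Proof.
  unfold comp, graph, conv, complE. split.
  - intros [z [<- H]]; exact H.
  - intros H; exists (alpha x); auto.
Qed.

Lemma U_Z : U Z.
Proof.
  split.
  - intros x y H. apply Z_iff in H. destruct H as [H _].
    apply E_trans with (alpha x); [apply HalphaE | apply E_sym; auto].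
  - intros u v x y H hxu hvy. apply Z_iff in H. apply Z_iff.
    destruct H as [H1 H2]. split.
    + apply E_trans with v. apply E_sym, HleE; auto.
      apply E_trans with (alpha u); auto. apply E_sym, HleE, (proj1 (a_mono _ _)); auto.
    + intro c. apply H2. apply le_trans with y; auto.
      apply le_trans with (alpha x); auto. apply (proj1 (a_mono _ _)); auto.
Qed.

Lemma U_le : U le.
Proof. split; auto. intros u v x y H1 H2 H3. eauto using le_trans. Qed.

Lemma U_cap R S : U R -> U S -> U (capR R S).
Proof.
  intros HR HS; split; unfold capR.
  - intros x y [r _]; eauto using UE.
  - intros u v x y [r s] ? ?; split; (eapply Uup; eauto using le_refl).
Qed.

Lemma U_cup R S : U R -> U S -> U (cupR R S).
Proof.
  intros HR HS; split; unfold cupR.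
  - intros x y [r|s]; eauto using UE.
  - intros u v x y [r|s] ? ?; [left|right]; (eapply Uup; eauto using le_refl).
Qed.

Lemma U_comp R S : U R -> U S -> U (comp R S).
Proof.
  intros HR HS; split; unfold comp.
  - intros x y [z [r s]]. apply E_trans with z; eauto using UE.
  - intros u v x y [z [r s]] ? ?. exists z; split; (eapply Uup; eauto using le_refl).
Qed.

Lemma U_ldiv R S : U R -> U S -> U (ldivR E R S).
Proof.
  intros HR HS; unfold ldivR, complE, comp, conv; split.
  - intros x y [H _]; exact H.
  - intros u v x y [Huv Hn] hxu hvy. split.
    + apply E_trans with u. apply HleE; auto.
      apply E_trans with v; auto.
    + intros [z [Rzx [Ezy nS]]]. apply Hn. exists z. split.
      * (eapply Uup; eauto using le_refl).
      * split. apply E_trans with y; auto. apply E_sym, HleE; auto.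
        intro c; apply nS; (eapply Uup; eauto using le_refl).
Qed.

Lemma U_rdiv R S : U R -> U S -> U (rdivR E R S).
Proof.
  intros HR HS; unfold rdivR, complE, comp, conv; split.
  - intros x y [H _]; exact H.
  - intros u v x y [Huv Hn] hxu hvy. split.
    + apply E_trans with u. apply HleE; auto.
      apply E_trans with v; auto.
    + intros [z [[Exz nR] Syz]]. apply Hn. exists z. split.
      * split. apply E_trans with x; auto. apply E_sym, HleE; auto.
        intro c; apply nR; (eapply Uup; eauto using le_refl).
      * (eapply Uup; eauto using le_refl).
Qed.

Lemma ldiv_spec R S T : U R -> U S -> U T ->
  ((forall x y, comp R S x y -> T x y) <-> (forall x y, S x y -> ldivR E R T x y)).
Proof.
  intros HR HS HT; unfold ldivR, complE, comp, conv; split.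
  - intros H x y Sxy. split. eauto using UE.
    intros [z [Rzx [Ezy nT]]]. apply nT, H. exists x; auto.
  - intros H x y [z [Rxz Szy]]. destruct (H z y Szy) as [_ Hn].
    apply NNPP; intro nT. apply Hn. exists x. split; auto. split; auto.
    apply E_trans with z; eauto using UE.
Qed.

Lemma rdiv_spec R S T : U R -> U S -> U T ->
  ((forall x y, comp R S x y -> T x y) <-> (forall x y, R x y -> rdivR E T S x y)).
Proof.
  intros HR HS HT; unfold rdivR, complE, comp, conv; split.
  - intros H x y Rxy. split. eauto using UE.
    intros [z [[Exz nT] Syz]]. apply nT, H. exists y; auto.
  - intros H x y [z [Rxz Szy]]. destruct (H x z Rxz) as [_ Hn].
    apply NNPP; intro nT. apply Hn. exists y. split; auto. split; auto.
    apply E_trans with z; eauto using UE.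
Qed.

Lemma lneg_iff R x y : U R ->
  (ldivR E R Z x y <-> E x y /\ ~ exists z, R z x /\ le y (alpha z)).
Proof.
  intro HR; unfold ldivR, complE, comp, conv. split.
  - intros [Exy Hn]. split; auto. intros [z [Rzx lyz]]. apply Hn. exists z.
    split; auto. split. apply E_trans with x; eauto using UE.
    intro HZ; apply Z_iff in HZ; destruct HZ; contradiction.
  - intros [Exy Hn]. split; auto. intros [z [Rzx [Ezy nZ]]]. apply Hn.
    exists z; split; auto. apply NNPP; intro c; apply nZ; apply Z_iff; split; auto.
    apply E_trans with z; auto. apply E_sym; auto.
Qed.

Lemma rneg_iff R x y : U R ->
  (rdivR E Z R x y <-> E x y /\ ~ R y (alpha x)).
Proof.
  intro HR; unfold rdivR, complE, comp, conv. split.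
  - intros [Exy Hn]. split; auto. intro Ry. apply Hn. exists (alpha x).
    split; auto. split; auto. intro HZ; apply Z_iff in HZ. destruct HZ as [_ c].
    apply c, le_refl.
  - intros [Exy nR]. split; auto. intros [z [[Exz nZ] Ryz]]. apply nR.
    assert (lz : le z (alpha x)).
    { apply NNPP; intro c; apply nZ; apply Z_iff; split; auto.
      apply E_trans with x; auto. apply E_sym; auto. }
    (eapply Uup; eauto using le_refl).
Qed.

Lemma U_g R : U R -> U (g R). Proof. intro; apply U_rdiv; auto using U_Z. Qed.
Lemma U_h R : U R -> U (h R). Proof. intro; apply U_ldiv; auto using U_Z. Qed.

Lemma hg R : U R -> h (g R) = R.
Proof.
  intro HR. apply rel_ext; intros x y. simpl.
  rewrite lneg_iff by (apply U_g; auto). split.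
  - intros [Exy Hn]. apply NNPP; intro nR. apply Hn.
    destruct (a_surj y) as [z Hz]. exists z. split.
    + apply rneg_iff; auto. split.
      * apply E_trans with y. rewrite <- Hz; auto. apply E_sym; auto.
      * rewrite Hz; auto.
    + rewrite Hz; apply le_refl.
  - intro Rxy. split; eauto using UE. intros [z [gz lyz]].
    apply rneg_iff in gz; auto. destruct gz as [_ nR]. apply nR.
    (eapply Uup; eauto using le_refl).
Qed.

Lemma gh R : U R -> g (h R) = R.
Proof.
  intro HR. apply rel_ext; intros x y. simpl.
  rewrite rneg_iff by (apply U_h; auto). split.
  - intros [Exy nh]. apply NNPP; intro nR; apply nh.
    apply lneg_iff; auto. split.
    + apply E_trans with x; auto. apply E_sym; auto.
    + intros [z [Rzy lz]]. apply nR. apply (proj2 (a_mono _ _)) in lz. (eapply Uup; eauto using le_refl).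
  - intro Rxy. split; eauto using UE. intro hh.
    apply lneg_iff in hh; auto. destruct hh as [_ Hn]. apply Hn.
    exists x. split; auto. apply le_refl.
Qed.

Lemma gg R x y : U R -> (g (g R) x y <-> R (alpha x) (alpha y)).
Proof.
  intro HR. simpl. rewrite rneg_iff by (apply U_g; auto). split.
  - intros [Exy n]. apply NNPP; intro nR; apply n. apply rneg_iff; auto.
    split; auto. apply E_trans with x; auto. apply E_sym; auto.
  - intro Raa. split.
    + apply E_trans with (alpha x); auto. apply E_trans with (alpha y);
      eauto using UE. apply E_sym; auto.
    + intro c; apply rneg_iff in c; auto. destruct c as [_ c]; auto.
Qed.

Lemma U_iter_g k R : U R -> U (Nat.iter k g R).
Proof. intro HR; induction k; simpl; auto. apply U_g; auto. Qed.
Lemma U_iter_h k R : U R -> U (Nat.iter k h R).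
Proof. intro HR; induction k; simpl; auto. apply U_h; auto. Qed.

Lemma ghk k R : U R -> Nat.iter k g (Nat.iter k h R) = R.
Proof.
  intro HR; induction k. reflexivity.
  rewrite Nat.iter_succ_r, Nat.iter_succ.
  rewrite (gh (Nat.iter k h R)) by (apply U_iter_h; auto). exact IHk.
Qed.

Lemma gg_iter m : forall R, U R -> forall x y,
  (Nat.iter (m + m) g R x y <-> R (Nat.iter m alpha x) (Nat.iter m alpha y)).
Proof.
  induction m; intros R HR x y. simpl; tauto.
  replace (S m + S m) with ((m + m) + 2) by lia.
  rewrite Nat.iter_add. rewrite (IHm (Nat.iter 2 g R)).
  - simpl Nat.iter at 1. rewrite gg by auto. simpl. tauto.
  - apply U_iter_g; auto.
Qed.

Lemma per_iff k : (forall R, U R -> Nat.iter k h R = Nat.iter k g R) <->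
  (forall x, Nat.iter k alpha x = x).
Proof.
  split.
  - intros H a. set (P := fun x y => le x a /\ le a y).
    assert (UP : U P).
    { split; unfold P.
      - intros x y [h1 h2]; apply HleE; eauto using le_trans.
      - intros u v x y [h1 h2] h3 h4; split; eauto using le_trans. }
    assert (e : Nat.iter k g (Nat.iter k h P) = P) by (apply ghk; auto).
    rewrite (H P UP) in e. rewrite <- Nat.iter_add in e.
    assert (c : Nat.iter (k + k) g P a a) by (rewrite e; split; apply le_refl).
    apply gg_iter in c; auto. destruct c as [c1 c2]. apply le_anti; auto.
  - intros Hid R HR.
    assert (cl : forall S, U S -> Nat.iter k g (Nat.iter k g S) = S).
    { intros S HS. apply rel_ext; intros x y. rewrite <- Nat.iter_add.
      rewrite gg_iter by auto. rewrite !Hid. tauto. }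
    rewrite <- (cl (Nat.iter k h R)) by (apply U_iter_h; auto).
    rewrite ghk by auto. reflexivity.
Qed.

Lemma per_iff' k : periodic_at U Z (ldivR E) (rdivR E) k <->
  (forall x, Nat.iter k alpha x = x).
Proof. exact (per_iff k). Qed.

End S.

Theorem theorem3p12 (X : Type) (le E : relation X) (alpha : X -> X)
  (Hle : is_poset le) (HE : is_equivalence E)
  (HleE : forall x y, le x y -> E x y)
  (Halpha : order_automorphism le alpha)
  (HalphaE : forall x, E x (alpha x))
  (Hzero : forall x y,
     comp (graph alpha) (conv (complE E le)) x y <->
     comp (conv (complE E le)) (graph alpha) x y) :
  let zero := comp (graph alpha) (conv (complE E le)) in
  distributive_InFL_algebra (UpE le E) (@capR X) (@cupR X) (@comp X) le zero
    (ldivR E) (rdivR E)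
  /\
  (forall n : nat, 0 < n ->
     (n_periodic (UpE le E) zero (ldivR E) (rdivR E) n
      <-> fun_order alpha n)).
Proof.
  intro zero. subst zero. pose proof (@le_refl X le Hle) as lr. split.
  - unfold distributive_InFL_algebra, FL_algebra.
    split; [|split].
    + split; [apply U_le; auto|]. split; [apply U_Z; auto|].
      split.
      { intros x y Hx Hy.
        split; [apply U_cap|split;[apply U_cup|split;[apply U_comp|split;[apply U_ldiv|apply U_rdiv]]]]; auto. }
      split.
      { intros x y _ _; split; apply rel_ext; unfold capR, cupR; tauto. }
      split.
      { intros x y z _ _ _; split; apply rel_ext; unfold capR, cupR; tauto. }
      split.
      { intros x y _ _; split; apply rel_ext; unfold capR, cupR; tauto. }
      split.
      { intros x y z _ _ _; apply rel_ext; unfold comp; firstorder. }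
      split.
      { intros R HR; split; apply rel_ext; intros x y; unfold comp; split.
        - intros [z [l r]]. eapply Uup; eauto.
        - intro r; exists x; split; auto.
        - intros [z [r l]]. eapply Uup; eauto.
        - intro r; exists y; split; auto. }
      intros x y z Hx Hy Hz; split; rewrite !lat_le_iff.
      * eapply ldiv_spec; eauto.
      * eapply rdiv_spec; eauto.
    + intros x y z _ _ _; apply rel_ext; unfold capR, cupR; tauto.
    + intros R HR; split.
      * eapply hg; eauto.
      * eapply gh; eauto.
  - intros n Hn. unfold n_periodic, fun_order.
    assert (P : forall k, periodic_at (UpE le E) (comp (graph alpha) (conv (complE E le))) (ldivR E) (rdivR E) k <-> (forall x, Nat.iter k alpha x = x)) by (intro k; eapply per_iff'; eauto).
    split; intros [h1 [h2 h3]]; split; auto; split.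
    + apply P; auto.
    + intros k hk c; apply (h3 k hk); apply P; auto.
    + apply P; auto.
    + intros k hk c; apply (h3 k hk); apply P; auto.
Qed.
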